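(* For any positive integers $q,k,t$ there exists a constant $f(q,k,t)$ such that the following holds. Let $D=(V,A)$ be a Steiner rooted $k$-arc-connected directed graph with root $r$ and a set $S\subseteq V\setminus\{r\}$ of $t$ terminals. Let $\mathcal{C}$ be a family of pairwise vertex-disjoint directed cycles in $D$ with $|\mathcal{C}|\ge f(q,k,t)$ such that every $C\in\mathcal{C}$ is $s$-essential for every $s\in S$. Then there exist $C_1,\ldots,C_q\in\mathcal{C}$ such that for every $s\in S$, either $(C_1,\ldots,C_q)$ or $(C_q,\ldots,C_1)$ is an $s$-ordered sequence of directed cycles.
   Context: Let $D=(V,A)$ be a directed graph with root $r\in V$ and terminal set $S\subseteq V\setminus\{r\}$; it is Steiner rooted $k$-arc-connected if for every $s\in S$ there are $k$ pairwise arc-disjoint directed $r$-$s$ paths. For $s\in S$, a set $U\subseteq V$ is an $s$-cut if $r\in U$ and $s\notin U$; it is a tight $s$-cut if moreover the number of arcs leaving $U$ equals $k$. A set $U$ properly intersects a directed cycle $C$ if $V(C)\cap U\neq\emptyset$ and $V(C)\setminus U\neq\emptyset$. A directed cycle $C$ is $s$-essential if some tight $s$-cut properly intersects $C$. A sequence of directed cycles $(C_1,\ldots,C_q)$ is $s$-ordered if there exist tight $s$-cuts $U_1,\ldots,U_q$ such that $V(C_i)\subseteq U_j$ for all $i<j$, $V(C_i)\cap U_j=\emptyset$ for all $i>j$, and $U_i$ properly intersects $C_i$ for every $i$. *)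

(* Defs.v *)
(* A digraph is a finite vertex type V, a finite arc type A
   (parallel arcs allowed) and maps tl/hd : A -> V giving tail and head. *)
From mathcomp Require Import all_boot.
Set Implicit Arguments. Unset Strict Implicit. Unset Printing Implicit Defensive.

Section Digraph.
Variables (V A : finType) (tl hd : A -> V).

Fixpoint is_walk (x y : V) (p : seq A) : bool :=
  match p with
  | [::] => x == y
  | a :: p' => (tl a == x) && is_walk (hd a) y p'
  end.

Definition dpath (x y : V) (p : seq A) : bool :=
  is_walk x y p && uniq (x :: map hd p).

Definition k_arc_disjoint_paths (k : nat) (r s : V) : Prop :=
  exists P : 'I_k -> seq A,
    (forall i, dpath r s (P i)) /\
    (forall i j, i != j -> [disjoint (P i) & (P j)]).

Definition steiner_rooted_k_arc_connected (k : nat) (r : V) (S : {set V}) : Prop :=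
  forall s, s \in S -> k_arc_disjoint_paths k r s.

Definition out_deg (U : {set V}) : nat :=
  #|[set a : A | (tl a \in U) && (hd a \notin U)]|.

Definition s_cut (r s : V) (U : {set V}) : bool := (r \in U) && (s \notin U).

Definition tight_s_cut (k : nat) (r s : V) (U : {set V}) : bool :=
  s_cut r s U && (out_deg U == k).

Definition arc_rel : rel V := fun x y => [exists a : A, (tl a == x) && (hd a == y)].

Definition dcycle (c : seq V) : bool :=
  [&& c != [::], uniq c & cycle arc_rel c].

Definition properly_intersects (U : {set V}) (c : seq V) : bool :=
  has (fun v => v \in U) c && has (fun v => v \notin U) c.

Definition s_essential (k : nat) (r s : V) (c : seq V) : Prop :=
  exists U : {set V}, tight_s_cut k r s U && properly_intersects U c.

Definition s_ordered (k : nat) (r s : V) (C : seq (seq V)) : Prop :=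
  exists U : nat -> {set V},
    (forall j, j < size C -> tight_s_cut k r s (U j)) /\
    (forall i j, i < j -> j < size C -> all (fun v => v \in U j) (nth [::] C i)) /\
    (forall i j, j < i -> i < size C -> all (fun v => v \notin U j) (nth [::] C i)) /\
    (forall i, i < size C -> properly_intersects (U i) (nth [::] C i)).

End Digraph.

(* Main.v *)
Require Import Defs.
From mathcomp Require Import all_boot.
From mathcomp Require Import zify.
Set Implicit Arguments. Unset Strict Implicit. Unset Printing Implicit Defensive.

Lemma pig_list (K T : eqType) (f : T -> K) (cs : seq K) (s : seq T) (g : nat) :
  0 < size cs -> (forall y, y \in s -> f y \in cs) -> size cs * g <= size s ->
  exists a, g <= count (fun y => f y == a) s.
Proof.
elim: cs s => [|c0 cs IH] s //= _ Hs Hsz.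
case: (leqP g (count (fun y => f y == c0) s)) => Hc; first by exists c0.
case: cs IH Hs Hsz => [|c1 cs] IH Hs Hsz.
  exists c0; rewrite (@eq_in_count _ _ predT); first by rewrite count_predT; lia.
  by move=> y /Hs; rewrite inE => /eqP ->; rewrite eqxx.
set s1 := filter (fun y => f y != c0) s.
have Hs1 : forall y, y \in s1 -> f y \in c1 :: cs.
  move=> y; rewrite mem_filter => /andP[Hn /Hs]; rewrite inE (negbTE Hn) //.
have Hsz1 : size s1 = size s - count (fun y => f y == c0) s.
  rewrite size_filter -(count_predC (fun y => f y == c0) s).
  rewrite addKn //.
have [a Ha] := IH s1 isT Hs1 ltac:(simpl in *; lia).
exists a; apply: (leq_trans Ha); rewrite /s1 count_filter.
by apply: sub_count => y /andP[].
Qed.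

Section Ramsey.
Variables (K : finType) (T : eqType) (col : T -> T -> K).

Fixpoint gbound (m : nat) : nat := if m is m'.+1 then (#|K| * gbound m').+1 else 0.

Lemma greedy m s : gbound m <= size s ->
  exists L : seq (T * K), [/\ size L = m, subseq (map fst L) s &
     pairwise (fun p p' => col p.1 p'.1 == p.2) L].
Proof.
elim: m s => [|m IH] s /=; first by exists [::]; rewrite sub0seq.
case: s => [|x s0] //= Hsz.
have Hk : 0 < size (enum K) by rewrite -cardE; apply/card_gt0P; exists (col x x).
have [a Ha] := @pig_list K T (col x) (enum K) s0 (gbound m) Hk
   (fun y _ => mem_enum K (col x y)) ltac:(rewrite -cardE; idtac; simpl in *; lia).
set s1 := filter (fun y => col x y == a) s0.
have [L1 [H1 H2 H3]] := IH s1 ltac:(by rewrite size_filter).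
exists ((x, a) :: L1); split => /=; first by rewrite H1.
  by rewrite eqxx; apply: subseq_trans H2 (filter_subseq _ _).
apply/andP; split => //; apply/allP => p Hp /=.
have : p.1 \in s1 by apply: (mem_subseq H2); apply: map_f.
by rewrite mem_filter => /andP[].
Qed.

Lemma ramsey_at (a0 : K) n s : gbound (#|K| * n) <= size s ->
  exists s' a, [/\ subseq s' s, size s' = n & pairwise (fun x y => col x y == a) s'].
Proof.
move=> Hs.
have [L [H1 H2 H3]] := greedy Hs.
have Hk : 0 < size (enum K) by rewrite -cardE; apply/card_gt0P; exists a0.
have [a Ha] := @pig_list K _ snd (enum K) L n Hk
   (fun y _ => mem_enum K y.2) ltac:(by rewrite -cardE H1).
set L' := filter (fun y => y.2 == a) L.
exists (take n (map fst L')), a; split.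
- apply: subseq_trans (take_subseq _ _) _; apply: subseq_trans H2.
  by apply: map_subseq; apply: filter_subseq.
- by rewrite size_takel // size_map size_filter.
- apply: subseq_pairwise (take_subseq _ _) _.
  rewrite pairwise_map.
  have : all (fun y => y.2 == a) L' by apply/allP => y; rewrite mem_filter => /andP[].
  move=> Hall; apply: (sub_in_pairwise _ Hall (pairwise_filter _ H3)) => p p' Hp _ /=; move: Hp => /eqP Hp; by rewrite Hp; move=> /eqP ->.
Qed.
End Ramsey.

Lemma ramsey (K : finType) (a0 : K) n : exists N, forall (T : eqType) (col : T -> T -> K) s,
  N <= size s ->
  exists s' a, [/\ subseq s' s, size s' = n & pairwise (fun x y => col x y == a) s'].
Proof. by exists (gbound K (#|K| * n)) => T col s Hs; apply: ramsey_at. Qed.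

Section Graph.
Variables (V A : finType) (tl hd : A -> V).

Definition leaving (U : {set V}) := [set a : A | (tl a \in U) && (hd a \notin U)].

Lemma out_degE U : out_deg tl hd U = #|leaving U|.
Proof. by []. Qed.

Lemma inj_count n (P : 'I_n -> pred A) (X : {set A}) :
  (forall i, exists a, P i a && (a \in X)) ->
  (forall i j a, P i a -> P j a -> i = j) -> n <= #|X|.
Proof.
move=> Hex Hinj.
pose h (i : 'I_n) := [pick a | P i a && (a \in X)].
have Hh : forall i, exists2 a, h i = Some a & P i a && (a \in X).
  move=> i; rewrite /h; case: pickP => [a Ha|H0]; first by exists a.
  by have [a Ha] := Hex i; rewrite H0 in Ha.
have hinj : injective h.
  move=> i j Hij; have [a Ha /andP[Pa _]] := Hh i; have [b Hb /andP[Pb _]] := Hh j.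
  by move: Hij; rewrite Ha Hb => [[Eab]]; apply: (Hinj _ _ a) => //; rewrite Eab.
have -> : n = #|[set h i | i : 'I_n]| by rewrite card_imset // card_ord.
rewrite -(card_imset X Some_inj).
apply: subset_leq_card; apply/subsetP => o /imsetP [i _ ->].
have [a Ha /andP[_ Xa]] := Hh i; rewrite Ha; exact: imset_f.
Qed.

Lemma walk_cross (U : {set V}) x y p : is_walk tl hd x y p -> x \in U -> y \notin U ->
  exists a, (a \in p) && (a \in leaving U).
Proof.
elim: p x => [|a p IH] x /=; first by move=> /eqP -> ->.
move=> /andP[/eqP Ha Hw] Hx Hy.
case Hh: (hd a \in U).
  by have [b /andP[Hb Hl]] := IH _ Hw Hh Hy; exists b; rewrite inE Hb orbT.
by exists a; rewrite inE eqxx inE Ha Hx Hh.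
Qed.

Lemma cut_ge k r s U : k_arc_disjoint_paths tl hd k r s -> s_cut r s U ->
  k <= out_deg tl hd U.
Proof.
move=> [P [HP Hd]] /andP[Hr Hs]; rewrite out_degE.
apply: (@inj_count k (fun i a => a \in P i)).
  move=> i; have /andP[Hw _] := HP i; exact: walk_cross Hw Hr Hs.
move=> i j a Hi Hj; apply/eqP; apply/negPn/negP => Hij.
by move: (Hd _ _ Hij) => /disjointFr /(_ Hi); rewrite Hj.
Qed.

Lemma out_deg_sum U : out_deg tl hd U = \sum_a ((tl a \in U) && (hd a \notin U) : nat).
Proof.
rewrite /out_deg -sum1dep_card big_mkcond /=; apply: eq_bigr => a _.
by case: ifP.
Qed.

Lemma submod X Y : out_deg tl hd (X :|: Y) + out_deg tl hd (X :&: Y) <=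
   out_deg tl hd X + out_deg tl hd Y.
Proof.
rewrite !out_deg_sum -!big_split /=.
apply: leq_sum => a _; rewrite !inE.
by case: (tl a \in X); case: (tl a \in Y); case: (hd a \in X); case: (hd a \in Y).
Qed.

Lemma tight_capcup k r s X Y : k_arc_disjoint_paths tl hd k r s ->
  tight_s_cut tl hd k r s X -> tight_s_cut tl hd k r s Y ->
  tight_s_cut tl hd k r s (X :&: Y) && tight_s_cut tl hd k r s (X :|: Y).
Proof.
move=> Hp /andP[/andP[Xr Xs] /eqP Xd] /andP[/andP[Yr Ys] /eqP Yd].
have c1 : s_cut r s (X :&: Y) by rewrite /s_cut !inE Xr Yr (negbTE Xs).
have c2 : s_cut r s (X :|: Y) by rewrite /s_cut !inE Xr (negbTE Xs) (negbTE Ys).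
have h1 := cut_ge Hp c1; have h2 := cut_ge Hp c2; have h3 := submod X Y.
rewrite /tight_s_cut c1 c2 /=; apply/andP; split; apply/eqP; lia.
Qed.

Lemma path_cross (e : rel V) (U : {set V}) x p : path e x p -> x \in U ->
  has (fun v => v \notin U) p -> exists y z, [/\ y \in x :: p, e y z, y \in U & z \notin U].
Proof.
elim: p x => [|z p IH] x //= /andP[Exz Hp] Hx /orP[Hz|Hh].
  by exists x, z; rewrite inE eqxx.
case Hz: (z \in U).
  have [y [z' [H1 H2 H3 H4]]] := IH z Hp Hz Hh.
  by exists y, z'; split => //; rewrite inE H1 orbT.
by exists x, z; rewrite inE eqxx Hz.
Qed.

Lemma cycle_cross (U : {set V}) c : dcycle tl hd c -> properly_intersects U c ->
  exists a, (tl a \in c) && (a \in leaving U).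
Proof.
move=> /and3P[_ _ Hc] /andP[/hasP[v vc vU] /hasP[w wc wU]].
have Hc' := Hc; rewrite -(rot_cycle (index v c)) in Hc'.
have Hhd : head v (rot (index v c) c) = v.
  by rewrite /rot (drop_nth v) ?index_mem //= nth_index.
case E: (rot (index v c) c) Hc' Hhd => [|x p] /= Hpc Ex; first by move: vc; rewrite -(mem_rot (index v c)) E.
subst x.
have Hw : has (fun v0 => v0 \notin U) (rcons p v).
  apply/hasP; exists w => //; rewrite mem_rcons inE.
  have : w \in v :: p by rewrite -E mem_rot.
  by rewrite inE => /orP[/eqP Ew|->]; [rewrite Ew vU in wU|rewrite orbT].
have [y [z [H1 H2 H3 H4]]] := path_cross Hpc vU Hw.
have Hy : y \in c.
  rewrite -(mem_rot (index v c)) E; move: H1; rewrite !inE mem_rcons inE.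
  by case: (y == v).
case/existsP: H2 => a /andP[/eqP Ha /eqP Hb].
by exists a; rewrite !inE Ha Hb H3 H4 Hy.
Qed.


Lemma many_proper k r s U (Ds : seq (seq V)) : tight_s_cut tl hd k r s U -> uniq Ds ->
  (forall C, C \in Ds -> dcycle tl hd C) ->
  (forall C C', C \in Ds -> C' \in Ds -> C != C' -> [disjoint C & C']) ->
  (forall C, C \in Ds -> properly_intersects U C) -> size Ds <= k.
Proof.
move=> /andP[_ /eqP Hd] Hu Hc Hdis Hp; rewrite -Hd out_degE.
apply: (@inj_count (size Ds) (fun i a => tl a \in nth [::] Ds i)).
  move=> i; have Hi := mem_nth [::] (ltn_ord i).
  exact: cycle_cross (Hc _ Hi) (Hp _ Hi).
move=> i j a Hi Hj; apply/eqP; apply/negPn/negP => Hij.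
have Hne : nth [::] Ds i != nth [::] Ds j by rewrite nth_uniq.
have := Hdis _ _ (mem_nth [::] (ltn_ord i)) (mem_nth [::] (ltn_ord j)) Hne.
by move=> /disjointFr /(_ Hi); rewrite Hj.
Qed.

Definition rel3 (U : {set V}) (C : seq V) : nat :=
  if all (fun v => v \in U) C then 0 else if all (fun v => v \notin U) C then 1 else 2.

Lemma rel3_lt U C : rel3 U C < 3.
Proof. by rewrite /rel3; case: ifP => //; case: ifP. Qed.

Lemma rel3_0 U C : rel3 U C = 0 -> all (fun v => v \in U) C.
Proof. by rewrite /rel3; case: ifP => //; case: ifP. Qed.

Lemma rel3_1 U C : rel3 U C = 1 -> all (fun v => v \notin U) C.
Proof. by rewrite /rel3; case: ifP => //; case: ifP. Qed.

Lemma rel3_2 U C : rel3 U C = 2 -> properly_intersects U C.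
Proof.
rewrite /rel3 /properly_intersects; case: ifP => // /negbT Ha; case: ifP => // /negbT Hb _.
rewrite -has_predC in Ha; rewrite -has_predC in Hb.
by apply/andP; split; [move: Hb | move: Ha]; apply: sub_has => v /=; rewrite ?negbK.
Qed.

Section PerS.
Variables (k : nat) (r s : V).

Definition W (C : seq V) : {set V} :=
  odflt set0 [pick U | tight_s_cut tl hd k r s U && properly_intersects U C].

Lemma W_spec C : s_essential tl hd k r s C ->
  tight_s_cut tl hd k r s (W C) && properly_intersects (W C) C.
Proof.
move=> [U HU]; rewrite /W; case: pickP => [U' ->|H0] //.
by rewrite H0 in HU.
Qed.

Definition col3 (C C' : seq V) : nat := 3 * rel3 (W C) C' + rel3 (W C') C.

Definition capl x l := foldr (fun C acc => W C :&: acc) (W x) l.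
Definition cupl x l := foldr (fun C acc => W C :|: acc) (W x) l.

Lemma in_capl v x l : (v \in capl x l) = (v \in W x) && all (fun C => v \in W C) l.
Proof.
elim: l => [|C l IH] /=; first by rewrite andbT.
by rewrite inE IH; case: (v \in W C); rewrite ?andbF.
Qed.

Lemma in_cupl v x l : (v \in cupl x l) = (v \in W x) || has (fun C => v \in W C) l.
Proof.
elim: l => [|C l IH] /=; first by rewrite orbF.
by rewrite inE IH; case: (v \in W C); rewrite ?orbT.
Qed.

Lemma capl_tight x l : k_arc_disjoint_paths tl hd k r s ->
  (forall C, C \in x :: l -> tight_s_cut tl hd k r s (W C)) ->
  tight_s_cut tl hd k r s (capl x l) && tight_s_cut tl hd k r s (cupl x l).
Proof.
move=> Hp; elim: l => [|C l IH] Ht /=.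
  by rewrite /capl /cupl /= Ht ?inE ?eqxx.
have Ht' : forall C0, C0 \in x :: l -> tight_s_cut tl hd k r s (W C0).
  by move=> C0; rewrite inE => /orP[/eqP->|H]; apply: Ht; rewrite !inE ?eqxx ?H ?orbT.
have /andP[H1 H2] := IH Ht'.
have HC : tight_s_cut tl hd k r s (W C) by apply: Ht; rewrite !inE eqxx orbT.
have /andP[H3 _] := tight_capcup Hp HC H1.
have /andP[_ H4] := tight_capcup Hp HC H2.
by rewrite /capl /cupl /= H3 H4.
Qed.


Lemma per_s q (H : seq (seq V)) a : k_arc_disjoint_paths tl hd k r s -> 0 < k -> 0 < q ->
  uniq H -> (forall C, C \in H -> dcycle tl hd C) ->
  (forall C, C \in H -> s_essential tl hd k r s C) ->
  (forall C C', C \in H -> C' \in H -> C != C' -> [disjoint C & C']) ->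
  size H = q + k -> pairwise (fun x y => col3 x y == a) H ->
  s_ordered tl hd k r s (take q H) \/ s_ordered tl hd k r s (rev (take q H)).
Proof.
move=> Hp Hk Hq Hu Hc He Hdis Hsz /(pairwiseP [::]) Hpw.
set n := size H in Hsz Hpw.
pose D i := nth [::] H i.
have HD : forall i, i < n -> D i \in H by move=> i Hi; apply: mem_nth.
have Hn2 : 1 < n by lia.
set al := rel3 (W (D 0)) (D 1).
set be := rel3 (W (D 1)) (D 0).
have Hrel : forall i j, i < j -> j < n ->
    rel3 (W (D i)) (D j) = al /\ rel3 (W (D j)) (D i) = be.
  move=> i j Hij Hj.
  have E1 := Hpw i j ltac:(rewrite inE; lia) Hj Hij.
  have E2 := Hpw 0 1 ltac:(rewrite inE; lia) Hn2 isT.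
  move: E1 E2; rewrite /col3 => /eqP E1 /eqP E2.
  have := rel3_lt (W (D i)) (D j); have := rel3_lt (W (D j)) (D i).
  have := rel3_lt (W (D 0)) (D 1); have := rel3_lt (W (D 1)) (D 0).
  rewrite /al /be /D; lia.
have Hidx : forall C, C \in H -> exists2 i, i < n & C = D i.
  by move=> C HC; exists (index C H); [rewrite index_mem | rewrite /D nth_index].
have Hspec : forall i, i < n -> tight_s_cut tl hd k r s (W (D i)) &&
    properly_intersects (W (D i)) (D i) by move=> i Hi; apply: W_spec; apply: He; apply: HD.
have HsT : forall i, i < n -> tight_s_cut tl hd k r s (W (D i)) by move=> i /Hspec /andP[].
have HsP : forall i, i < n -> properly_intersects (W (D i)) (D i) by move=> i /Hspec /andP[].
have Hal : al < 3 by apply: rel3_lt.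
have Hbe : be < 3 by apply: rel3_lt.
have contra : forall U, tight_s_cut tl hd k r s U ->
    (forall i, i < n -> properly_intersects U (D i)) -> False.
  move=> U HU Hpr.
  have := many_proper HU Hu Hc Hdis.
  have : size H <= k; last by lia.
  apply: many_proper HU Hu Hc Hdis _ => C /Hidx [i Hi ->]; exact: Hpr.
have [Ha2|Ha2] := eqVneq al 2.
  exfalso; apply: (contra (W (D 0))); first exact: HsT 0 ltac:(lia).
  move=> [|i] Hi; first exact: HsP 0 ltac:(lia).
  by apply: rel3_2; have [-> _] := Hrel 0 i.+1 isT Hi.
have [Hb2|Hb2] := eqVneq be 2.
  exfalso; apply: (contra (W (D n.-1))); first exact: HsT n.-1 ltac:(lia).
  move=> i Hi; have [Ei|Ei] := eqVneq i n.-1; first by rewrite Ei; apply: HsP; lia.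
  by apply: rel3_2; have [_ ->] := Hrel i n.-1 ltac:(lia) ltac:(lia).
have Hsym : forall i j, i < n -> j < n -> i != j ->
    rel3 (W (D i)) (D j) = if i < j then al else be.
  move=> i j Hi Hj Hij; case: ltnP => Hl; first by have [-> _] := Hrel i j Hl Hj.
  by have [_ ->] := Hrel j i ltac:(lia) Hi.
have Hall : forall i, i < n -> forall C, C \in H -> tight_s_cut tl hd k r s (W C).
  by move=> _ _ C /Hidx [j Hj ->]; exact: HsT j Hj.
have Hal01 : al = 0 \/ al = 1 by lia.
have Hbe01 : be = 0 \/ be = 1 by lia.
case: Hal01 => Ha; case: Hbe01 => Hb.
- (* all contain: intersection *)
  exfalso; have /andP[Ht _] := @capl_tight (D 0) H Hp
    ltac:(by move=> C; rewrite inE => /orP[/eqP->|/Hidx [j Hj ->]];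
              [exact: HsT 0 ltac:(lia) | exact: HsT j Hj]).
  apply: (contra _ Ht) => j Hj.
  have /andP[_ /andP[/hasP[v vD vW] /hasP[w wD wW]]] := Hspec j Hj.
  apply/andP; split; apply/hasP.
    exists v => //; rewrite in_capl; apply/andP; split.
      have [E0|E0] := eqVneq j 0; first by rewrite -E0.
      have E := Hsym 0 j ltac:(lia) Hj ltac:(by rewrite eq_sym).
      rewrite Ha Hb if_same in E; exact: (allP (rel3_0 E)).
    apply/allP => C /Hidx [i Hi ->]; have [Eij|Eij] := eqVneq i j; first by rewrite Eij.
    have E := Hsym i j Hi Hj Eij.
    rewrite Ha Hb if_same in E; exact: (allP (rel3_0 E)).
  exists w => //; rewrite in_capl negb_and; apply/orP; right.
  by apply/allPn; exists (D j) => //; apply: HD.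
-
  right; exists (fun j => W (nth [::] (rev (take q H)) j)).
  have Hs : size (take q H) = q by rewrite size_takel //; lia.
  rewrite size_rev Hs.
  split; [|split; [|split]].
  + move=> j Hj; rewrite nth_rev Hs // nth_take; last by lia.
    apply: HsT; lia.
  + move=> i j Hij Hj; rewrite !nth_rev Hs //; last by lia.
    rewrite !nth_take; try lia.
    have [E _] := Hrel (q - j.+1) (q - i.+1) ltac:(lia) ltac:(lia); apply: rel3_0; by rewrite E.
  + move=> i j Hij Hi; rewrite !nth_rev Hs //; last by lia.
    rewrite !nth_take; try lia.
    have [_ E] := Hrel (q - i.+1) (q - j.+1) ltac:(lia) ltac:(lia); apply: rel3_1; by rewrite E.
  + move=> i Hi; rewrite nth_rev Hs // nth_take; last by lia.
    apply: HsP; lia.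
-
  left; exists (fun j => W (nth [::] (take q H) j)).
  rewrite size_takel; last by lia.
  split; [|split; [|split]].
  + by move=> j Hj; rewrite nth_take //; apply: HsT; lia.
  + move=> i j Hij Hj; rewrite !nth_take //; last by lia.
    have [_ E] := Hrel i j Hij ltac:(lia); apply: rel3_0; by rewrite E.
  + move=> i j Hij Hi; rewrite !nth_take //; last by lia.
    have [E _] := Hrel j i Hij ltac:(lia); apply: rel3_1; by rewrite E.
  + by move=> i Hi; rewrite nth_take //; apply: HsP; lia.
- (* all disjoint: union *)
  exfalso; have /andP[_ Ht] := @capl_tight (D 0) H Hp
    ltac:(by move=> C; rewrite inE => /orP[/eqP->|/Hidx [j Hj ->]];
              [exact: HsT 0 ltac:(lia) | exact: HsT j Hj]).
  apply: (contra _ Ht) => j Hj.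
  have /andP[_ /andP[/hasP[v vD vW] /hasP[w wD wW]]] := Hspec j Hj.
  apply/andP; split; apply/hasP.
    exists v => //; rewrite in_cupl; apply/orP; right.
    by apply/hasP; exists (D j) => //; apply: HD.
  exists w => //; rewrite in_cupl negb_or; apply/andP; split.
    have [E0|E0] := eqVneq j 0; first by rewrite -E0.
    have E := Hsym 0 j ltac:(lia) Hj ltac:(by rewrite eq_sym).
    rewrite Ha Hb if_same in E; exact: (allP (rel3_1 E)).
  apply/hasPn => C /Hidx [i Hi ->]; have [Eij|Eij] := eqVneq i j; first by rewrite Eij.
  have E := Hsym i j Hi Hj Eij.
  rewrite Ha Hb if_same in E; exact: (allP (rel3_1 E)).
Qed.

End PerS.
End Graph.

Theorem proposition2p4 :
  forall q k t : nat, 0 < q -> 0 < k -> 0 < t ->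
  exists f : nat,
  forall (V A : finType) (tl hd : A -> V) (r : V) (S : {set V})
         (Cs : seq (seq V)),
    r \notin S -> #|S| = t ->
    steiner_rooted_k_arc_connected tl hd k r S ->
    (forall C, C \in Cs -> dcycle tl hd C) ->
    (forall i j, i < size Cs -> j < size Cs -> i != j ->
       [disjoint nth [::] Cs i & nth [::] Cs j]) ->
    f <= size Cs ->
    (forall C s, C \in Cs -> s \in S -> s_essential tl hd k r s C) ->
    exists C : seq (seq V),
      [/\ size C = q, all (fun c => c \in Cs) C &
        forall s, s \in S ->
          s_ordered tl hd k r s C \/ s_ordered tl hd k r s (rev C)].
Proof.
move=> q k t Hq Hk Ht.
have [N HN] := @ramsey {ffun 'I_t -> 'I_9} [ffun=> ord0] (q + k).
exists N => V A tl hd r S Cs HrS HS Hconn Hcyc Hdisj HNs Hess.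
pose col := fun C C' : seq V =>
  [ffun i : 'I_t => (inord (col3 tl hd k r (nth r (enum S) i) C C') : 'I_9)].
have [H [a [Hsub Hsz Hpw]]] := HN _ col Cs HNs.
have HdisE : forall C C', C \in Cs -> C' \in Cs -> C != C' -> [disjoint C & C'].
  move=> C C' HC HC' Hne.
  rewrite -(nth_index [::] HC) -(nth_index [::] HC'); apply: Hdisj; rewrite ?index_mem //.
  by apply: contraNneq Hne => E; rewrite -(nth_index [::] HC) -(nth_index [::] HC') E.
have Huniq : uniq Cs.
  apply/(uniqP [::]) => i j Hi Hj E; apply/eqP; apply/negPn/negP => Hij.
  have := Hdisj i j Hi Hj Hij; rewrite E.
  have := Hcyc _ (mem_nth [::] Hj); case: (nth [::] Cs j) => [|x c] //= _.
  by rewrite disjoint_cons inE eqxx.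
have HsubC : forall C, C \in H -> C \in Cs by move=> C; apply: (mem_subseq Hsub).
exists (take q H); split.
- by rewrite size_takel // Hsz leq_addr.
- by apply/allP => c Hc; apply: HsubC; exact: (mem_subseq (take_subseq H q) Hc).
move=> s Hs.
have Hi : index s (enum S) < t by rewrite -HS cardE index_mem mem_enum.
pose i_s := Ordinal Hi.
apply: (@per_s V A tl hd k r s q H (val (a i_s))) => //.
- exact: Hconn.
- exact: subseq_uniq Hsub Huniq.
- by move=> C /HsubC; apply: Hcyc.
- by move=> C /HsubC HC; apply: Hess.
- by move=> C C' /HsubC HC /HsubC HC'; apply: HdisE.
- apply: sub_pairwise Hpw => x y /eqP E.
  have := congr1 (fun f : {ffun 'I_t -> 'I_9} => val (f i_s)) E.
  rewrite /= ffunE /= inordK.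
    by rewrite /i_s /= nth_index ?mem_enum // => ->.
  rewrite /col3 /i_s /=; set s' := nth r (enum S) (index s (enum S)).
  have := rel3_lt (W tl hd k r s' x) y; have := rel3_lt (W tl hd k r s' y) x; lia.
Qed.
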